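(* Let $\varphi$ be a GFG-QPTL formula and $\mathcal X_1,\mathcal X_2\in\mathrm{HAsg}_\supseteq(\mathrm{free}(\varphi))$ with $\mathcal X_1\sqsubseteq\mathcal X_2$. Then $\mathcal X_1\models^{\exists\forall}\varphi$ implies $\mathcal X_2\models^{\exists\forall}\varphi$, and $\mathcal X_2\models^{\forall\exists}\varphi$ implies $\mathcal X_1\models^{\forall\exists}\varphi$.
   Context: Let $AP$ be a set of atomic propositions and $\mathbb B=\{\top,\bot\}$. A temporal valuation is a function $f:\mathbb N\to\mathbb B$. An assignment is a partial function $\chi:AP\rightharpoonup(\mathbb N\to\mathbb B)$; $\mathrm{Asg}$ is the set of all assignments, $\mathrm{Asg}(P)$ the set of assignments with domain exactly $P\subseteq AP$. For an assignment $\chi$, $p\in AP$ and a temporal valuation $f$, $\chi[p\mapsto f]$ is the assignment that agrees with $\chi$ except that it maps $p$ to $f$. A hyperassignment is a set $\mathcal X$ with $\emptyset\neq\mathcal X\subseteq 2^{\mathrm{Asg}(P)}$ and $\emptyset\notin\mathcal X$, for some $P\subseteq AP$; this $P$ is denoted $\mathrm{ap}(\mathcal X)$. $\mathrm{HAsg}$ is the set of all hyperassignments, $\mathrm{HAsg}(P)$ those with $\mathrm{ap}(\mathcal X)=P$, and $\mathrm{HAsg}_\supseteq(P)$ those with $\mathrm{ap}(\mathcal X)\supseteq P$. For $\mathcal X_1,\mathcal X_2\in\mathrm{HAsg}$, $\mathcal X_1\sqsubseteq\mathcal X_2$ iff for every $X_1\in\mathcal X_1$ there is $X_2\in\mathcal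 X_2$ with $X_2\subseteq X_1$. A choice function for $\mathcal X$ is a map $c:\mathcal X\to\mathrm{Asg}$ with $c(X)\in X$ for all $X\in\mathcal X$. The dual of $\mathcal X$ is $\overline{\mathcal X}=\{\mathrm{img}(c): c\text{ a choice function for }\mathcal X\}$. $\mathrm{par}(\mathcal X)$ is the set of pairs $(\mathcal X_1,\mathcal X_2)$ of (possibly empty) subsets of $\mathcal X$ with $\mathcal X_1\cap\mathcal X_2=\emptyset$ and $\mathcal X_1\cup\mathcal X_2=\mathcal X$. A functor over $P\subseteq AP$ is a function $F:\mathrm{Asg}(P)\to(\mathbb N\to\mathbb B)$; $\mathrm{Fnc}(P)$ is the set of all of them. $\mathrm{ext}(\chi,F,p)=\chi[p\mapsto F(\chi)]$ and $\mathrm{ext}(X,F,p)=\{\mathrm{ext}(\chi,F,p):\chi\in X\}$. For $\chi_1,\chi_2\in\mathrm{Asg}(P)$, $p\in P$, $k\in\mathbb N$: $\chi_1\approx^{>k}_p\chi_2$ iff $\chi_1(q)=\chi_2(q)$ for all $q\in P\setminus\{p\}$ and $\chi_1(p)(t)=\chi_2(p)(t)$ for all $t\le k$; $\chi_1\approx^{\ge k}_p\chi_2$ is defined the same way with $t<k$ in place of $t\le k$. $F\in\mathrm{Fnc}(P)$ is behavioral (resp. strongly behavioral) w.r.t. $p\in P$ if $F(\chi_1)(k)=F(\chi_2)(k)$ for all $k\in\mathbb N$ and all $\chi_1,\chi_2$ with $\chi_1\approx^{>k}_p\chi_2$ (resp. $\chi_1\approx^{\ge k}_p\chi_2$). A quantifier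 specification is a pair $\sigma=\langle P_B,P_S\rangle$ of subsets of $AP$; $\mathrm{Fnc}_\sigma(P)$ is the set of $F\in\mathrm{Fnc}(P)$ that are behavioral w.r.t. every $p\in P_B\cap P$ and strongly behavioral w.r.t. every $p\in P_S\cap P$. $\mathrm{ext}_\sigma(\mathcal X,p)=\{\mathrm{ext}(X,F,p):X\in\mathcal X,\ F\in\mathrm{Fnc}_\sigma(\mathrm{ap}(\mathcal X))\}$. GFG-QPTL formulas are generated by $\varphi::=\psi\mid\neg\varphi\mid\varphi\wedge\varphi\mid\varphi\vee\varphi\mid\exists p{:}\sigma.\varphi\mid\forall p{:}\sigma.\varphi$, where $\psi$ is an LTL formula over $AP$, $p\in AP$ and $\sigma$ a quantifier specification; we also write $\exists^\sigma p.\varphi$, $\forall^\sigma p.\varphi$. QPTL formulas are those in which every specification is $\langle\emptyset,\emptyset\rangle$. $\mathrm{free}(\varphi)$ is the set of free propositions. $\chi\models_{LTL}\psi$ iff the infinite word whose $t$-th letter is the valuation $q\mapsto\chi(q)(t)$ satisfies $\psi$ in the standard LTL sense. Alternation flags are $\exists\forall$ and $\forall\exists$; $\bar\alpha$ is the flag different from $\alpha$. For a GFG-QPTL formula $\varphi$, $\mathcal X\in\mathrm{HAsg}_\supseteq(\mathrm{free}(\varphi))$ and flag $\alpha$, $\mathcal X\models^\alpha\varphi$ is defined inductively: (1) for LTL $\psi$: $\mathcal X\models^{\exists\forall}\psi$ iff there is $X\in\mathcal X$ with $\chi\models_{LTL}\psi$ for all $\chi\in X$; $\mathcal X\models^{\forall\exists}\psi$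 iff for every $X\in\mathcal X$ there is $\chi\in X$ with $\chi\models_{LTL}\psi$; (2) $\mathcal X\models^\alpha\neg\phi$ iff not $\mathcal X\models^{\bar\alpha}\phi$; (3) $\mathcal X\models^{\exists\forall}\phi_1\wedge\phi_2$ iff for every $(\mathcal X_1,\mathcal X_2)\in\mathrm{par}(\mathcal X)$, either ($\mathcal X_1\ne\emptyset$ and $\mathcal X_1\models^{\exists\forall}\phi_1$) or ($\mathcal X_2\ne\emptyset$ and $\mathcal X_2\models^{\exists\forall}\phi_2$); $\mathcal X\models^{\forall\exists}\phi_1\wedge\phi_2$ iff $\overline{\mathcal X}\models^{\exists\forall}\phi_1\wedge\phi_2$; (4) $\mathcal X\models^{\forall\exists}\phi_1\vee\phi_2$ iff there is $(\mathcal X_1,\mathcal X_2)\in\mathrm{par}(\mathcal X)$ such that ($\mathcal X_1\neq\emptyset$ implies $\mathcal X_1\models^{\forall\exists}\phi_1$) and ($\mathcal X_2\neq\emptyset$ implies $\mathcal X_2\models^{\forall\exists}\phi_2$); $\mathcal X\models^{\exists\forall}\phi_1\vee\phi_2$ iff $\overline{\mathcal X}\models^{\forall\exists}\phi_1\vee\phi_2$; (5) $\mathcal X\models^{\exists\forall}\exists p{:}\sigma.\phi$ iff $\mathrm{ext}_\sigma(\mathcal X,p)\models^{\exists\forall}\phi$; $\mathcal X\models^{\forall\exists}\exists p{:}\sigma.\phi$ iff $\overline{\mathcal X}\models^{\exists\forall}\exists p{:}\sigma.\phi$; (6) $\mathcal X\models^{\forall\exists}\forall p{:}\sigma.\phi$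 iff $\mathrm{ext}_\sigma(\mathcal X,p)\models^{\forall\exists}\phi$; $\mathcal X\models^{\exists\forall}\forall p{:}\sigma.\phi$ iff $\overline{\mathcal X}\models^{\forall\exists}\forall p{:}\sigma.\phi$. *)

(* Defs.v *)
From Stdlib Require Import Classical ClassicalEpsilon FunctionalExtensionality PropExtensionality.

Set Implicit Arguments.

Section GFG.
Variable AP : Type.

Definition tval := nat -> bool.

Definition Asg := AP -> option tval.

Definition inAsg (P : AP -> Prop) (chi : Asg) : Prop :=
  forall q, chi q <> None <-> P q.

(* value chi(q)(t); only used when q in dom chi *)
Definition val (chi : Asg) (q : AP) (t : nat) : bool :=
  match chi q with Some f => f t | None => false end.

Definition upd (chi : Asg) (p : AP) (f : tval) : Asg :=
  fun q => if excluded_middle_informative (q = p) then Some f else chi q.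

Definition isHAsg (P : AP -> Prop) (HX : (Asg -> Prop) -> Prop) : Prop :=
  (exists X, HX X) /\
  (forall X, HX X -> exists chi, X chi) /\
  (forall X chi, HX X -> X chi -> inAsg P chi).

Definition isHAsg_sup (P : AP -> Prop) (HX : (Asg -> Prop) -> Prop) : Prop :=
  exists P', isHAsg P' HX /\ (forall q, P q -> P' q).

Definition hrefine (HX1 HX2 : (Asg -> Prop) -> Prop) : Prop :=
  forall X1, HX1 X1 -> exists X2, HX2 X2 /\ (forall chi, X2 chi -> X1 chi).

Definition choice_fun (HX : (Asg -> Prop) -> Prop) (c : (Asg -> Prop) -> Asg) : Prop :=
  forall X, HX X -> X (c X).

Definition img (HX : (Asg -> Prop) -> Prop) (c : (Asg -> Prop) -> Asg) : Asg -> Prop :=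
  fun chi => exists X, HX X /\ chi = c X.

Definition dual (HX : (Asg -> Prop) -> Prop) : (Asg -> Prop) -> Prop :=
  fun Y => exists c, choice_fun HX c /\ Y = img HX c.

Definition par (HX HX1 HX2 : (Asg -> Prop) -> Prop) : Prop :=
  forall X, (HX X <-> (HX1 X \/ HX2 X)) /\ ~ (HX1 X /\ HX2 X).

Definition nonempty (HX : (Asg -> Prop) -> Prop) : Prop := exists X, HX X.

(* functors over P: only the values on Asg(P) are relevant *)
Definition Fnc := Asg -> tval.

Definition approx_gt (P : AP -> Prop) (p : AP) (k : nat) (chi1 chi2 : Asg) : Prop :=
  (forall q, P q -> q <> p -> chi1 q = chi2 q) /\
  (forall t, t <= k -> val chi1 p t = val chi2 p t).

Definition approx_ge (P : AP -> Prop) (p : AP) (k : nat) (chi1 chi2 : Asg) : Prop :=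
  (forall q, P q -> q <> p -> chi1 q = chi2 q) /\
  (forall t, t < k -> val chi1 p t = val chi2 p t).

Definition behavioral (P : AP -> Prop) (p : AP) (F : Fnc) : Prop :=
  forall k chi1 chi2, inAsg P chi1 -> inAsg P chi2 ->
    approx_gt P p k chi1 chi2 -> F chi1 k = F chi2 k.

Definition strongly_behavioral (P : AP -> Prop) (p : AP) (F : Fnc) : Prop :=
  forall k chi1 chi2, inAsg P chi1 -> inAsg P chi2 ->
    approx_ge P p k chi1 chi2 -> F chi1 k = F chi2 k.

Record qspec := QSpec { PB : AP -> Prop; PS : AP -> Prop }.

Definition Fnc_sigma (s : qspec) (P : AP -> Prop) (F : Fnc) : Prop :=
  (forall p, PB s p -> P p -> behavioral P p F) /\
  (forall p, PS s p -> P p -> strongly_behavioral P p F).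

Definition ext_set (X : Asg -> Prop) (F : Fnc) (p : AP) : Asg -> Prop :=
  fun chi' => exists chi, X chi /\ chi' = upd chi p (F chi).

Definition ext_sigma (s : qspec) (HX : (Asg -> Prop) -> Prop) (p : AP)
  : (Asg -> Prop) -> Prop :=
  fun Y => exists X F P, HX X /\ isHAsg P HX /\ Fnc_sigma s P F /\ Y = ext_set X F p.

Inductive ltl : Type :=
  | LTrue | LFalse
  | LAtom (p : AP)
  | LNot (f : ltl)
  | LAnd (f g : ltl)
  | LOr (f g : ltl)
  | LNext (f : ltl)
  | LUntil (f g : ltl)
  | LRelease (f g : ltl)
  | LEventually (f : ltl)
  | LGlobally (f : ltl).

Fixpoint ltl_sat (w : nat -> AP -> bool) (i : nat) (f : ltl) : Prop :=
  match f with
  | LTrue => True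
  | LFalse => False
  | LAtom p => w i p = true
  | LNot f => ~ ltl_sat w i f
  | LAnd f g => ltl_sat w i f /\ ltl_sat w i g
  | LOr f g => ltl_sat w i f \/ ltl_sat w i g
  | LNext f => ltl_sat w (S i) f
  | LUntil f g => exists j, i <= j /\ ltl_sat w j g /\ (forall k, i <= k < j -> ltl_sat w k f)
  | LRelease f g => forall j, i <= j -> ltl_sat w j g \/ (exists k, i <= k < j /\ ltl_sat w k f)
  | LEventually f => exists j, i <= j /\ ltl_sat w j f
  | LGlobally f => forall j, i <= j -> ltl_sat w j f
  end.

Definition asg_word (chi : Asg) : nat -> AP -> bool := fun t q => val chi q t.

Definition ltl_models (chi : Asg) (f : ltl) : Prop := ltl_sat (asg_word chi) 0 f.

Fixpoint ltl_props (f : ltl) (q : AP) : Prop :=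
  match f with
  | LTrue | LFalse => False
  | LAtom p => q = p
  | LNot f | LNext f | LEventually f | LGlobally f => ltl_props f q
  | LAnd f g | LOr f g | LUntil f g | LRelease f g => ltl_props f q \/ ltl_props g q
  end.

Inductive gfg : Type :=
  | GLtl (psi : ltl)
  | GNot (f : gfg)
  | GAnd (f g : gfg)
  | GOr (f g : gfg)
  | GEx (p : AP) (s : qspec) (f : gfg)
  | GAll (p : AP) (s : qspec) (f : gfg).

Fixpoint free (f : gfg) (q : AP) : Prop :=
  match f with
  | GLtl psi => ltl_props psi q
  | GNot f => free f q
  | GAnd f g | GOr f g => free f q \/ free g q
  | GEx p _ f | GAll p _ f => free f q /\ q <> p
  end.

Inductive flag := EA | AE.

Definition flip (a : flag) : flag := match a with EA => AE | AE => EA end.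

Fixpoint sat (f : gfg) (a : flag) (HX : (Asg -> Prop) -> Prop) : Prop :=
  match f with
  | GLtl psi =>
      match a with
      | EA => exists X, HX X /\ forall chi, X chi -> ltl_models chi psi
      | AE => forall X, HX X -> exists chi, X chi /\ ltl_models chi psi
      end
  | GNot f => ~ sat f (flip a) HX
  | GAnd f1 f2 =>
      let conjEA := fun HY => forall HY1 HY2, par HY HY1 HY2 ->
          (nonempty HY1 /\ sat f1 EA HY1) \/ (nonempty HY2 /\ sat f2 EA HY2) in
      match a with EA => conjEA HX | AE => conjEA (dual HX) end
  | GOr f1 f2 =>
      let disjAE := fun HY => exists HY1 HY2, par HY HY1 HY2 /\
          (nonempty HY1 -> sat f1 AE HY1) /\ (nonempty HY2 -> sat f2 AE HY2) in
      match a with AE => disjAE HX | EA => disjAE (dual HX) end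
  | GEx p s f =>
      match a with
      | EA => sat f EA (ext_sigma s HX p)
      | AE => sat f EA (ext_sigma s (dual HX) p)
      end
  | GAll p s f =>
      match a with
      | AE => sat f AE (ext_sigma s HX p)
      | EA => sat f AE (ext_sigma s (dual HX) p)
      end
  end.

End GFG.

(* Main.v *)
Require Import Defs.
From Stdlib Require Import Classical ClassicalEpsilon FunctionalExtensionality PropExtensionality.

Set Implicit Arguments.
Section Pf.
Variable AP : Type.
Notation HA := ((Asg AP -> Prop) -> Prop).

Definition good (HX : HA) := exists P, isHAsg P HX.

Lemma inhA : inhabited (Asg AP).
Proof. constructor. exact (fun _ => None). Qed.

Lemma good_sub (HX HY : HA) : good HX -> (forall X, HY X -> HX X) -> nonempty HY -> good HY.
Proof.
  intros [P [H1 [H2 H3]]] Hs [X HX']. exists P. split; [eauto|split; eauto].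
Qed.

Lemma good_dual (HX : HA) : good HX -> good (dual HX).
Proof.
  intros [P [[X0 H0] [H2 H3]]]. exists P.
  set (c0 := fun X : Asg AP -> Prop => epsilon inhA (fun chi => X chi)).
  assert (Hc : choice_fun HX c0).
  { intros X HXX. unfold c0. apply epsilon_spec. apply H2; auto. }
  split; [|split].
  - exists (img HX c0). exists c0. auto.
  - intros Y [c [Hc' ->]]. exists (c X0). exists X0. auto.
  - intros Y chi [c [Hc' ->]] [X [HXX ->]]. eapply H3; eauto. apply Hc'; auto.
Qed.

Lemma good_ext (s : qspec AP) (HX : HA) p : good HX -> good (ext_sigma s HX p).
Proof.
  intros [P HP]. pose proof HP as HP0. destruct HP as [[X0 H0] [H2 H3]].
  exists (fun q => P q \/ q = p). split; [|split].
  - exists (ext_set X0 (fun _ _ => false) p). exists X0, (fun _ _ => false), P.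
    split; [|split; [|split]]; auto; split; intros ? ? ? ? ? ? ? ?; reflexivity.
  - intros Y [X [F [Q [HXX [_ [_ ->]]]]]]. destruct (H2 X HXX) as [chi Hc].
    exists (upd chi p (F chi)). exists chi. auto.
  - intros Y chi' [X [F [Q [HXX [_ [_ ->]]]]]] [chi [Hc ->]].
    pose proof (H3 X chi HXX Hc) as Hin.
    intro q. unfold upd. destruct (excluded_middle_informative (q = p)).
    + split; [auto | discriminate].
    + specialize (Hin q). tauto.
Qed.

Lemma dual_ref (HX1 HX2 : HA) : hrefine HX1 HX2 -> hrefine (dual HX2) (dual HX1).
Proof.
  intros Hr Y [c2 [Hc2 ->]].
  set (e := fun X1 : Asg AP -> Prop =>
              epsilon (inhabits (fun _ : Asg AP => False))
                      (fun X2 => HX2 X2 /\ forall chi, X2 chi -> X1 chi)).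
  assert (He : forall X1, HX1 X1 -> HX2 (e X1) /\ forall chi, e X1 chi -> X1 chi).
  { intros X1 H. unfold e. apply epsilon_spec. apply Hr; auto. }
  exists (img HX1 (fun X1 => c2 (e X1))). split.
  - exists (fun X1 => c2 (e X1)). split; auto.
    intros X1 H. destruct (He X1 H) as [Ha Hb]. apply Hb. apply Hc2. exact Ha.
  - intros chi [X1 [H ->]]. exists (e X1). split; auto. apply He; auto.
Qed.

Lemma ext_ref (s : qspec AP) p (HX HY : HA) : hrefine HX HY -> good HY ->
  hrefine (ext_sigma s HX p) (ext_sigma s HY p).
Proof.
  intros Hr [Q [HQ1 [HQ2 HQ3]]] Y [X [F [P [HXX [HP [HF ->]]]]]].
  destruct (Hr X HXX) as [X' [HY' Hsub]].
  destruct (HQ2 X' HY') as [chi0 Hc0].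
  assert (HPQ : forall q, P q <-> Q q).
  { intro q. destruct HP as [_ [_ HP3]].
    rewrite <- (HP3 X chi0 HXX (Hsub _ Hc0) q), <- (HQ3 X' chi0 HY' Hc0 q). tauto. }
  exists (ext_set X' F p). split.
  - exists X', F, P. split; [auto|split; [|split; auto]]. split; [|split].
    + exists X'; auto.
    + intros X'' H; apply HQ2; auto.
    + intros X'' chi H1 H2 q. rewrite (HQ3 X'' chi H1 H2 q). rewrite HPQ. tauto.
  - intros chi' [chi [Hc ->]]. exists chi. auto.
Qed.

Definition zpart (HX Y1 : HA) : HA :=
  fun X => HX X /\ exists X', Y1 X' /\ forall chi, X' chi -> X chi.
Definition zpart2 (HX Y1 : HA) : HA :=
  fun X => HX X /\ ~ exists X', Y1 X' /\ forall chi, X' chi -> X chi.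

Lemma zpar (HX Y1 : HA) : par HX (zpart HX Y1) (zpart2 HX Y1).
Proof.
  intro X. unfold zpart, zpart2. split; [|tauto].
  split; [|tauto]. intro H.
  destruct (classic (exists X', Y1 X' /\ forall chi, X' chi -> X chi)); tauto.
Qed.

Lemma zref1 (HX HY Y1 Y2 : HA) : par HY Y1 Y2 -> hrefine (zpart HX Y1) Y1.
Proof. intros _ X [_ [X' [H1 H2]]]. eauto. Qed.

Lemma zref2 (HX HY Y1 Y2 : HA) : hrefine HX HY -> par HY Y1 Y2 -> hrefine (zpart2 HX Y1) Y2.
Proof.
  intros Hr Hp X [HXX Hn]. destruct (Hr X HXX) as [X' [H1 H2]].
  exists X'. split; auto. destruct (Hp X') as [[Ha _] _].
  destruct (Ha H1); auto. exfalso. apply Hn. eauto.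
Qed.

Lemma ref_ne (HX HY : HA) : hrefine HX HY -> nonempty HX -> nonempty HY.
Proof. intros Hr [X H]. destruct (Hr X H) as [X' [H1 _]]. exists X'; auto. Qed.

Lemma par_sub1 (HY Y1 Y2 : HA) : par HY Y1 Y2 -> forall X, Y1 X -> HY X.
Proof. intros Hp X H. apply (proj1 (Hp X)). auto. Qed.
Lemma par_sub2 (HY Y1 Y2 : HA) : par HY Y1 Y2 -> forall X, Y2 X -> HY X.
Proof. intros Hp X H. apply (proj1 (Hp X)). auto. Qed.

Definition PropP (f : gfg AP) := forall HX1 HX2 : HA, good HX1 -> good HX2 -> hrefine HX1 HX2 ->
  (sat f EA HX1 -> sat f EA HX2) /\ (sat f AE HX2 -> sat f AE HX1).

Lemma conj_mono f1 f2 (HX HY : HA) : PropP f1 -> PropP f2 -> good HX -> good HY -> hrefine HX HY ->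
  (forall HY1 HY2, par HX HY1 HY2 ->
     (nonempty HY1 /\ sat f1 EA HY1) \/ (nonempty HY2 /\ sat f2 EA HY2)) ->
  (forall HY1 HY2, par HY HY1 HY2 ->
     (nonempty HY1 /\ sat f1 EA HY1) \/ (nonempty HY2 /\ sat f2 EA HY2)).
Proof.
  intros I1 I2 gX gY Hr H Y1 Y2 Hp.
  destruct (H _ _ (zpar HX Y1)) as [[Hn Hs]|[Hn Hs]].
  - left. pose proof (zref1 (HX:=HX) Hp) as Hr1. assert (nonempty Y1) by (eapply ref_ne; eauto).
    split; auto.
    assert (G1 : good (zpart HX Y1)) by (eapply good_sub; [exact gX| intros X [? _]; auto | auto]).
    assert (G2 : good Y1) by (eapply good_sub; [exact gY| eapply par_sub1; eauto | auto]).
    exact (proj1 (I1 _ _ G1 G2 Hr1) Hs).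
  - right. pose proof (zref2 Hr Hp) as Hr1. assert (nonempty Y2) by (eapply ref_ne; eauto).
    split; auto.
    assert (G1 : good (zpart2 HX Y1)) by (eapply good_sub; [exact gX| intros X [? _]; auto | auto]).
    assert (G2 : good Y2) by (eapply good_sub; [exact gY| eapply par_sub2; eauto | auto]).
    exact (proj1 (I2 _ _ G1 G2 Hr1) Hs).
Qed.

Lemma disj_anti f1 f2 (HX HY : HA) : PropP f1 -> PropP f2 -> good HX -> good HY -> hrefine HX HY ->
  (exists HY1 HY2, par HY HY1 HY2 /\
          (nonempty HY1 -> sat f1 AE HY1) /\ (nonempty HY2 -> sat f2 AE HY2)) ->
  (exists HY1 HY2, par HX HY1 HY2 /\
          (nonempty HY1 -> sat f1 AE HY1) /\ (nonempty HY2 -> sat f2 AE HY2)).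
Proof.
  intros I1 I2 gX gY Hr [Y1 [Y2 [Hp [H1 H2]]]].
  exists (zpart HX Y1), (zpart2 HX Y1). split; [apply zpar|split].
  - intro Hn. pose proof (zref1 (HX:=HX) Hp) as Hr1. assert (nonempty Y1) by (eapply ref_ne; eauto).
    assert (G1 : good (zpart HX Y1)) by (eapply good_sub; [exact gX| intros X [? _]; auto | auto]).
    assert (G2 : good Y1) by (eapply good_sub; [exact gY| eapply par_sub1; eauto | auto]).
    exact (proj2 (I1 _ _ G1 G2 Hr1) (H1 H)).
  - intro Hn. pose proof (zref2 Hr Hp) as Hr1. assert (nonempty Y2) by (eapply ref_ne; eauto).
    assert (G1 : good (zpart2 HX Y1)) by (eapply good_sub; [exact gX| intros X [? _]; auto | auto]).
    assert (G2 : good Y2) by (eapply good_sub; [exact gY| eapply par_sub2; eauto | auto]).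
    exact (proj2 (I2 _ _ G1 G2 Hr1) (H2 H)).
Qed.

Lemma main_gen (f : gfg AP) : PropP f.
Proof.
  induction f; intros HX1 HX2 g1 g2 Hr.
  - simpl. split.
    + intros [X [HX Hm]]. destruct (Hr X HX) as [X' [H1 H2]]. eauto.
    + intros H X HX. destruct (Hr X HX) as [X' [H1 H2]].
      destruct (H X' H1) as [chi [Hc Hm]]. eauto.
  - simpl. destruct (IHf _ _ g1 g2 Hr) as [Ha Hb]. split.
    + intros Hn Hs. apply Hn. apply Hb. exact Hs.
    + intros Hn Hs. apply Hn. apply Ha. exact Hs.
  - simpl. split.
    + apply conj_mono; auto.
    + apply conj_mono; auto using good_dual, dual_ref.
  - simpl. split.
    + apply disj_anti; auto using good_dual, dual_ref.
    + apply disj_anti; auto.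
  - simpl. split.
    + apply (IHf _ _ (good_ext s p g1) (good_ext s p g2) (@ext_ref s p _ _ Hr g2)).
    + apply (IHf _ _ (good_ext s p (good_dual g2)) (good_ext s p (good_dual g1))).
      apply ext_ref; auto using good_dual, dual_ref.
  - simpl. split.
    + apply (IHf _ _ (good_ext s p (good_dual g2)) (good_ext s p (good_dual g1))).
      apply ext_ref; auto using good_dual, dual_ref.
    + apply (IHf _ _ (good_ext s p g1) (good_ext s p g2) (@ext_ref s p _ _ Hr g2)).
Qed.
End Pf.
Unset Implicit Arguments.

Theorem mainTheorem8 (AP : Type) (phi : gfg AP) (HX1 HX2 : (Asg AP -> Prop) -> Prop) :
  isHAsg_sup (free phi) HX1 -> isHAsg_sup (free phi) HX2 -> hrefine HX1 HX2 ->
  (sat phi EA HX1 -> sat phi EA HX2) /\ (sat phi AE HX2 -> sat phi AE HX1).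
Proof.
  intros [P1 [H1 _]] [P2 [H2 _]] Hr.
  apply (main_gen phi); [exists P1 | exists P2 | ]; auto.
Qed.
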